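(* Let $(X_t)_{t\ge1}$ be a strictly stationary time series with continuous stationary distribution function $F$, and let $M_m=\max(X_1,\dots,X_m)$. Let $\gamma\in\mathbb{R}$, $\rho\le 0$, $\theta\in(0,1]$, and let $b(t)=Q(e^{-1/t})$ for $t>1$, where $Q$ is the generalized inverse of $F$. Assume that there exist a positive function $a(\cdot)$ and a function $A(\cdot)$ of eventually constant sign with $A(s)\to0$ as $s\to\infty$ such that for all $x>0$ $$\lim_{s\to\infty}\frac{1}{A(s)}\left(\frac{b(sx)-b(s)}{a(s)}-\int_1^x u^{\gamma-1}\,du\right)=\mathcal{H}_{\gamma,\rho}(x):=\int_1^x v^{\gamma-1}\int_1^v u^{\rho-1}\,du\,dv,$$ and that, for integer sequences $m=m_n\to\infty$ and $k=k_n\to\infty$, $\sqrt{k}A(m)\to\lambda\in\mathbb{R}$ as $n\to\infty$. Define $a_\theta(m)=a(m)\theta^\gamma$ and $b_\theta(m)=b(m)+a(m)(\theta^\gamma-1)/\gamma$ (with $(\theta^\gamma-1)/\gamma=\log\theta$ if $\gamma=0$). Then, as $n\to\infty$, $$\sqrt{k}\left(\frac{a_\theta(m)}{a(\theta m)}-1\right)=-\lambda\frac{\theta^\rho-1}{\rho}+o(1),$$ $$\sqrt{k}\,\frac{b_\theta(m)-b(\theta m)}{a(\theta m)}=\lambda\theta^\rho\mathcal{H}_{\gamma,\rho}(\theta^{-1})+\lambda\frac{\theta^\rho-1}{\rho}\,\frac{\theta^{-\gamma}-1}{\gamma}+o(1),$$ (with $(\theta^\rho-1)/\rho=\log\theta$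 if $\rho=0$). Moreover, if in addition $\lim_{m\to\infty}\mathbb{P}(M_m\le a_\theta(m)z+b_\theta(m))=G_\gamma(z)$ for all $z$ (which holds when $F$ is in the max-domain of attraction of $G_\gamma$ and the series has extremal index $\theta$), then for all $z$, $$\lim_{n\to\infty}\mathbb{P}\big(M_m\le a(\theta m)z+b(\theta m)\big)=G_\gamma(z).$$
   Context: $G_\gamma(z)=\exp(-(1+\gamma z)_+^{-1/\gamma})$ is the generalized extreme value (GEV) distribution function ($G_0(z)=\exp(-e^{-z})$), with $(x)_+=\max(0,x)$. The generalized inverse is $Q(\tau)=\inf\{x: F(x)\ge\tau\}$. A series has extremal index $\theta\in(0,1]$ if for every $x>0$ and every sequence $u_m$ with $m(1-F(u_m))\to x$ one has $\mathbb{P}(M_m\le u_m)\to e^{-\theta x}$. *)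

(* Defs.v *)
From HB Require Import structures.
From mathcomp Require Import all_boot all_order all_algebra.
From mathcomp Require Import all_classical all_reals all_analysis.
Set Implicit Arguments. Unset Strict Implicit. Unset Printing Implicit Defensive.
Import Order.TTheory GRing.Theory Num.Theory.
Import numFieldNormedType.Exports.
Local Open Scope classical_set_scope.
Local Open Scope ring_scope.

Section Defs.
Context {R : realType}.

Definition oint (f : R -> R) (a b : R) : R :=
  if a <= b then Rintegral lebesgue_measure `[a, b] f
  else - Rintegral lebesgue_measure `[b, a] f.

Definition h_int (g x : R) : R := oint (fun u => u `^ (g - 1)) 1 x.

Definition Hgr (g r x : R) : R :=
  oint (fun v => v `^ (g - 1) * oint (fun u => u `^ (r - 1)) 1 v) 1 x.

Definition hpow (g x : R) : R := if g == 0 then ln x else (x `^ g - 1) / g.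

(* GEV distribution function G_g(z) = exp(-(1+g z)_+^(-1/g)), G_0 = exp(-e^{-z});
   with the conventions 0^(-1/g) = +oo for g > 0 (G = 0) and 0 for g < 0 (G = 1). *)
Definition GEV (g z : R) : R :=
  if g == 0 then expR (- expR (- z))
  else if 0 < 1 + g * z then expR (- ((1 + g * z) `^ (- g^-1)))
  else if 0 < g then 0 else 1.

Definition geninv (F : R -> R) (tau : R) : R := inf [set x | tau <= F x].

Context {d : measure_display} {T : measurableType d}.

(* M_m = max(X_1, ..., X_m) (time indices start at 1; X 0 is unused) *)
Definition Mmax (X : nat -> T -> R) (m : nat) (w : T) : R :=
  \big[Num.max/X 1%N w]_(1 <= i < m.+1) X i w.

(* strict stationarity: all finite-dimensional distributions of
   (X_{1+h}, ..., X_{n+h}) coincide with those of (X_1, ..., X_n),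
   tested on measurable rectangles (which determine the joint law) *)
Definition strictly_stationary (P : probability T R) (X : nat -> T -> R) :=
  forall (n h : nat) (B : nat -> set R), (forall i, measurable (B i)) ->
    P [set w | forall i, (i < n)%N -> B i (X (i.+1 + h)%N w)] =
    P [set w | forall i, (i < n)%N -> B i (X i.+1 w)].

Definition stat_cdf (P : probability T R) (X : nat -> T -> R) (x : R) : R :=
  fine (P [set w | X 1%N w <= x]).

End Defs.

(* Main.v *)
Require Import Defs.
From HB Require Import structures.
From mathcomp Require Import all_boot all_order all_algebra.
From mathcomp Require Import all_classical all_reals all_analysis.
Import Order.TTheory GRing.Theory Num.Theory.
Import numFieldNormedType.Exports.
Local Open Scope classical_set_scope.
Local Open Scope ring_scope.
From mathcomp Require Import ring lra.
Set Implicit Arguments. Unset Strict Implicit.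
Section S1.
Context {R : realType}.
Lemma cont_of_derive {F : R -> R} {y l : R} : is_derive y 1 F l -> {for y, continuous F}.
Proof.
move=> H; apply/differentiable_continuous; rewrite -derivable1_diffP.
by case: H.
Qed.

Lemma ftc_ab (f F : R -> R) (a b : R) :
 (forall y : R, 0 < y -> is_derive y 1 F (f y)) ->
 (forall y : R, 0 < y -> {for y, continuous f}) ->
 0 < a -> a < b -> Rintegral lebesgue_measure `[a, b] f = F b - F a.
Proof.
move=> dF cf a0 ab.
rewrite /Rintegral (@continuous_FTC2 _ _ F)//.
- apply: continuous_in_subspaceT => x; rewrite inE /= in_itv /= => /andP[ax _].
  by apply: cf; apply: lt_le_trans ax.
- split.
  + move=> x; rewrite in_itv /= => /andP[ax _].
    by case: (dF x (lt_trans a0 ax)).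
  + exact: cvg_at_right_filter (cont_of_derive (dF a a0)).
  + exact: cvg_at_left_filter (cont_of_derive (dF b (lt_trans a0 ab))).
- move=> x; rewrite in_itv /= => /andP[ax _].
  by rewrite derive1E; case: (dF x (lt_trans a0 ax)) => _ ->.
Qed.

Lemma oint_ftc (f F : R -> R) (x : R) :
 (forall y : R, 0 < y -> is_derive y 1 F (f y)) ->
 (forall y : R, 0 < y -> {for y, continuous f}) ->
 0 < x -> oint f 1 x = F x - F 1.
Proof.
move=> dF cf x0; rewrite /oint.
case: ltgtP => [x1|x1|<-].
- by rewrite (@ftc_ab f F 1 x dF cf).
- by rewrite (@ftc_ab f F x 1 dF cf) // opprB.
- by rewrite set_itv1 Rintegral_set1 subrr.
Qed.
Implicit Types (f g : R -> R) (x c df dg : R).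
Lemma dM f g x df dg : is_derive x 1 f df -> is_derive x 1 g dg ->
  is_derive x 1 (fun u => f u * g u) (f x * dg + g x * df).
Proof. move=> H1 H2; exact: (is_deriveM H1 H2). Qed.
Lemma dD f g x df dg : is_derive x 1 f df -> is_derive x 1 g dg ->
  is_derive x 1 (fun u => f u + g u) (df + dg).
Proof. move=> H1 H2; exact: (is_deriveD H1 H2). Qed.
Lemma dB f g x df dg : is_derive x 1 f df -> is_derive x 1 g dg ->
  is_derive x 1 (fun u => f u - g u) (df - dg).
Proof. move=> H1 H2; exact: (is_deriveB H1 H2). Qed.
Lemma dZ f x c df : is_derive x 1 f df ->
  is_derive x 1 (fun u => c * f u) (c * df).
Proof. move=> H1; exact: (is_deriveZ c H1). Qed.
Lemma dC x c : is_derive x 1 (fun _ => c) 0.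
Proof. exact: is_derive_cst. Qed.
Lemma dE f x df df' : is_derive x 1 f df -> df = df' -> is_derive x 1 f df'.
Proof. by move=> H <-. Qed.
Lemma dext f g x df : (forall u, f u = g u) -> is_derive x 1 f df -> is_derive x 1 g df.
Proof. by move=> e; have -> : f = g by apply: funext. Qed.
End S1.
Section S2.
Context {R : realType}.

Lemma oint_ext (f g : R -> R) x : (forall y, 0 < y -> f y = g y) -> 0 < x ->
  oint f 1 x = oint g 1 x.
Proof.
move=> fg x0; rewrite /oint; case: ifP => _.
- apply: eq_Rintegral => y; rewrite inE /= in_itv /= => /andP[y1 _].
  by apply: fg; apply: lt_le_trans y1.
- congr (- _); apply: eq_Rintegral => y; rewrite inE /= in_itv /= => /andP[y1 _].
  by apply: fg; apply: lt_le_trans y1.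
Qed.

Lemma oint_ftc2 (f g F : R -> R) x : (forall y, 0 < y -> f y = g y) ->
 (forall y : R, 0 < y -> is_derive y 1 F (g y)) ->
 (forall y : R, 0 < y -> {for y, continuous g}) ->
 0 < x -> oint f 1 x = F x - F 1.
Proof. by move=> fg dF cg x0; rewrite (oint_ext fg x0) (oint_ftc dF cg x0). Qed.

Lemma powRE (a x : R) : 0 < a -> a `^ x = expR (x * ln a).
Proof. by move=> a0; rewrite /powR gt_eqF. Qed.

Lemma d_hpow (c y : R) : 0 < y -> is_derive y 1 (hpow c) (y `^ (c - 1)).
Proof.
move=> y0; rewrite /hpow; case: eqP => [->|c0].
- apply: dE (is_derive1_ln y0) _.
  by rewrite sub0r powR_inv1 // ltW.
- apply: (dext (f := fun u => c^-1 * (u `^ c - 1))).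
    by move=> u; rewrite mulrC.
  apply: dE (dZ _ (dB (is_derive1_powR c y0) (dC _ _))) _.
  by rewrite subr0 mulrA mulVf ?mul1r //; apply/eqP.
Qed.

Lemma cont_powR (c y : R) : 0 < y -> {for y, continuous (fun u => u `^ c)}.
Proof. by move=> y0; apply: cont_of_derive (is_derive1_powR c y0). Qed.

Lemma hpow1 c : hpow c (1 : R) = 0.
Proof. by rewrite /hpow powR1 subrr mul0r ln1; case: eqP. Qed.

Lemma h_int_hpow (c x : R) : 0 < x -> h_int c x = hpow c x.
Proof.
move=> x0; rewrite /h_int.
have := @oint_ftc2 (fun u => u `^ (c-1)) (fun u => u `^ (c-1)) (hpow c) x
  (fun _ _ => erefl) (fun y y0 => @d_hpow c y y0) (fun y y0 => @cont_powR (c-1) y y0) x0.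
by rewrite hpow1 subr0.
Qed.

End S2.
Section S3.
Context {R : realType}.

Definition Hc (g r v : R) : R :=
  if r != 0 then r^-1 * (hpow (g + r) v - hpow g v)
  else if g != 0 then g^-1 * (v `^ g * ln v - hpow g v)
  else 2^-1 * (ln v * ln v).

Lemma d_Hc (g r y : R) : 0 < y -> is_derive y 1 (Hc g r) (y `^ (g - 1) * hpow r y).
Proof.
move=> y0.
have yn0 : y != 0 by rewrite gt_eqF.
have [r0|r0] := eqVneq r 0.
- have [g0|g0] := eqVneq g 0.
  + apply: (@dext _ (fun v => 2^-1 * (ln v * ln v))).
      by move=> u; rewrite /Hc r0 g0 !eqxx.
    apply: dE (dZ _ (dM (is_derive1_ln y0) (is_derive1_ln y0))) _.
    rewrite /hpow r0 g0 eqxx sub0r powR_inv1 ?ltW //.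
    by field.
  + apply: (@dext _ (fun v => g^-1 * (v `^ g * ln v - hpow g v))).
      by move=> u; rewrite /Hc r0 eqxx (negbTE g0).
    apply: dE (dZ _ (dB (dM (is_derive1_powR g y0) (is_derive1_ln y0)) (d_hpow g y0))) _.
    rewrite /hpow r0 eqxx.
    have -> : y `^ (g - 1) = y `^ g / y by rewrite powRB ?powRr1 ?ltW // yn0 implybT.
    by field; rewrite yn0 g0.
- apply: (@dext _ (fun v => r^-1 * (hpow (g + r) v - hpow g v))).
    by move=> u; rewrite /Hc r0.
  apply: dE (dZ _ (dB (d_hpow (g + r) y0) (d_hpow g y0))) _.
  rewrite /hpow (negbTE r0).
  have -> : y `^ (g + r - 1) = y `^ (g - 1) * y `^ r.
    by rewrite -powRD ?yn0 ?implybT //; congr (_ `^ _); rewrite addrAC.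
  by field; rewrite ?yn0 ?r0.
Qed.

Lemma cont_integrand (g r y : R) : 0 < y ->
  {for y, continuous (fun v => v `^ (g - 1) * hpow r v)}.
Proof.
by move=> y0; apply: cont_of_derive (dM (is_derive1_powR (g - 1) y0) (d_hpow r y0)).
Qed.

Lemma Hc1 (g r : R) : Hc g r 1 = 0.
Proof. rewrite /Hc !hpow1 ln1 subrr !mulr0; case: ifP => _ //; case: ifP => _; by rewrite ?subrr ?mulr0. Qed.

Lemma Hgr_Hc (g r x : R) : 0 < x -> Hgr g r x = Hc g r x.
Proof.
move=> x0; rewrite /Hgr.
have := @oint_ftc2 R (fun v => v `^ (g - 1) * oint (fun u => u `^ (r - 1)) 1 v)
  (fun v => v `^ (g - 1) * hpow r v) (Hc g r) x _
  (fun y y0 => @d_Hc g r y y0) (fun y y0 => @cont_integrand g r y y0) x0.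
rewrite Hc1 subr0; apply.
by move=> y y0; have := h_int_hpow r y0; rewrite /h_int => ->.
Qed.

End S3.
Section S4.
Context {R : realType}.

Lemma hpowM (c x y : R) : 0 < x -> 0 < y ->
  hpow c (x * y) = hpow c x + x `^ c * hpow c y.
Proof.
move=> x0 y0; rewrite /hpow; case: eqP => [->|c0].
  by rewrite powRr0 mul1r lnM ?posrE.
rewrite powRM ?ltW //; field; exact/eqP.
Qed.

Lemma powRDp (x a b : R) : 0 < x -> x `^ (a + b) = x `^ a * x `^ b.
Proof. by move=> x0; rewrite powRD // (gt_eqF x0) implybT. Qed.

Lemma powR_hpow (r y : R) : 0 < y -> y `^ r = 1 + r * hpow r y.
Proof.
move=> y0; rewrite /hpow; case: eqP => [->|r0]; first by rewrite powRr0 mul0r addr0.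
by field; apply/eqP.
Qed.

Lemma HcM (g r x y : R) : 0 < x -> 0 < y ->
  Hc g r (x * y) = Hc g r x + x `^ g * hpow r x * hpow g y + x `^ (g + r) * Hc g r y.
Proof.
move=> x0 y0; rewrite /Hc.
have [r0|r0] := eqVneq r 0.
- rewrite r0 /= addr0.
  have [g0|g0] := eqVneq g 0.
  + by rewrite g0 /= /hpow eqxx powRr0 lnM ?posrE //; field.
  + rewrite /= !hpowM // powRM ?ltW // lnM ?posrE //.
    by rewrite /hpow (negbTE g0) eqxx; field; rewrite ?g0.
- by rewrite /= !hpowM // powRDp // (powR_hpow r x0); field; rewrite ?r0.
Qed.

Lemma hpow_gt0 (c y : R) : 1 < y -> 0 < hpow c y.
Proof.
move=> y1; have y0 : 0 < y by apply: lt_trans y1.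
have ly : 0 < ln y by apply: ln_gt0.
rewrite /hpow; case: eqP => // /eqP c0.
rewrite powRE //.
have [cn|cp] := ltP c 0.
- have e1 : expR (c * ln y) < 1 by rewrite expR_lt1 nmulr_rlt0.
  have -> : (expR (c * ln y) - 1) / c = (1 - expR (c * ln y)) / (- c).
    by rewrite invrN mulrN -mulNr opprB.
  by apply: divr_gt0; rewrite ?subr_gt0 ?oppr_gt0.
- have cp' : 0 < c by rewrite lt_neqAle eq_sym c0.
  have e1 : 1 < expR (c * ln y) by rewrite expR_gt1 mulr_gt0.
  by apply: divr_gt0; rewrite ?subr_gt0.
Qed.

Lemma rHh_gt0 (g r y : R) : 1 < y -> 0 < hpow g y + r * Hc g r y.
Proof.
move=> y1; rewrite /Hc; have [r0|r0] := eqVneq r 0.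
  by rewrite r0 mul0r addr0 hpow_gt0.
rewrite /= mulrA mulfV // mul1r addrC subrK; exact: hpow_gt0.
Qed.

Lemma det_ne0 (g r y : R) : 1 < y ->
  hpow g y * Hc g r (y * y) - hpow g (y * y) * Hc g r y != 0.
Proof.
move=> y1; have y0 : 0 < y by apply: lt_trans y1.
rewrite HcM // hpowM // powRDp // (powR_hpow r y0).
have -> : hpow g y * (Hc g r y + y `^ g * hpow r y * hpow g y +
   y `^ g * (1 + r * hpow r y) * Hc g r y) -
   (hpow g y + y `^ g * hpow g y) * Hc g r y =
   y `^ g * hpow g y * hpow r y * (hpow g y + r * Hc g r y) by ring.
apply/lt0r_neq0; apply: mulr_gt0; last exact: rHh_gt0.
by rewrite !mulr_gt0 ?powR_gt0 ?hpow_gt0.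
Qed.

End S4.
Section S5.
Context {R : realType}.

Lemma cramer {T} {F : set_system T} {FF : Filter F}
  (P U k1 k2 R1 R2 : T -> R) (h1 h2 K1 K2 c d : R) :
  (\forall t \near F, P t * h1 + U t * k1 t = R1 t) ->
  (\forall t \near F, P t * h2 + U t * k2 t = R2 t) ->
  k1 @ F --> K1 -> k2 @ F --> K2 ->
  R1 @ F --> c * h1 + d * K1 -> R2 @ F --> c * h2 + d * K2 ->
  h1 * K2 - h2 * K1 != 0 ->
  P @ F --> c /\ U @ F --> d.
Proof.
move=> E1 E2 ck1 ck2 cR1 cR2 D0.
pose D t := h1 * k2 t - h2 * k1 t.
have cD : D @ F --> h1 * K2 - h2 * K1.
  by apply: cvgB; apply: cvgMr.
have DN : \forall t \near F, D t != 0 by apply: cvgr_neq0 cD D0.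
split.
- apply: cvg_trans (near_eq_cvg (f := fun t => (R1 t * k2 t - R2 t * k1 t) / D t) _) _.
    apply: filterS3 E1 E2 DN => t <- <- dn /=; rewrite /D in dn *.
    by field.
  have -> : c = ((c * h1 + d * K1) * K2 - (c * h2 + d * K2) * K1) / (h1 * K2 - h2 * K1).
    by field.
  apply: cvgM; last exact: cvgV.
  by apply: cvgB; apply: cvgM.
- apply: cvg_trans (near_eq_cvg (f := fun t => (h1 * R2 t - h2 * R1 t) / D t) _) _.
    apply: filterS3 E1 E2 DN => t <- <- dn /=; rewrite /D in dn *.
    by field.
  have -> : d = (h1 * (c * h2 + d * K2) - h2 * (c * h1 + d * K1)) / (h1 * K2 - h2 * K1).
    by field.
  apply: cvgM; last exact: cvgV.
  by apply: cvgB; apply: cvgMr.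
Qed.
End S5.
Section S6.
Context {R : realType}.

Lemma scale_cvg (x : R) : 0 < x -> (fun s => s * x) @ +oo --> +oo.
Proof.
move=> x0; apply/cvgryPge => M.
have := nbhs_pinfty_ge (num_real (M / x)); apply: filterS => s sM.
by rewrite -ler_pdivrMr.
Qed.

Lemma core (h H hr : R -> R) (gam rho : R) (a A b : R -> R) (x y : R) :
 (forall x y, 0 < x -> 0 < y -> h (x * y) = h x + x `^ gam * h y) ->
 (forall x y, 0 < x -> 0 < y ->
    H (x * y) = H x + x `^ gam * hr x * h y + x `^ (gam + rho) * H y) ->
 (forall s, 0 < s -> 0 < a s) ->
 (\forall s \near +oo, A s != 0) ->
 (forall x, 0 < x -> (fun s => (A s)^-1 * ((b (s * x) - b s) / a s - h x)) @ +oo --> H x) ->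
 0 < x -> 0 < y -> h y * H (y * y) - h (y * y) * H y != 0 ->
 (fun s => (a (s * x) / a s - x `^ gam) / A s) @ +oo --> x `^ gam * hr x /\
 (fun s => a (s * x) / a s * (A (s * x) / A s)) @ +oo --> x `^ (gam + rho).
Proof.
move=> hE HE apos Anz hyp x0 y0 det.
have yy0 : 0 < y * y by apply: mulr_gt0.
pose g z s := (A s)^-1 * ((b (s * z) - b s) / a s - h z).
have sx := scale_cvg x0.
have Anzx : \forall s \near +oo, A (s * x) != 0 by exact: (sx _ Anz).
have spos : \forall s \near +oo, 0 < (s : R) by exact: (nbhs_pinfty_gt (num_real 0)).
have lin : forall z, 0 < z -> \forall s \near +oo,
    (a (s * x) / a s - x `^ gam) / A s * h z + a (s * x) / a s * (A (s * x) / A s) * g z (s * x)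
    = g (x * z) s - g x s.
  move=> z z0; near=> s.
  have s0 : 0 < s by near: s.
  have As : A s != 0 by near: s.
  have Asx : A (s * x) != 0 by near: s.
  have as0 : a s != 0 by rewrite gt_eqF // apos.
  have asx0 : a (s * x) != 0 by rewrite gt_eqF // apos // mulr_gt0.
  rewrite /g hE // (mulrA s x z).
  by field; rewrite ?As ?Asx ?as0 ?asx0.
  Unshelve. all: end_near.
have ck : forall z, 0 < z -> (fun s => g z (s * x)) @ +oo --> H z.
  by move=> z z0; apply: (cvg_comp _ _ sx (hyp z z0)).
have cR : forall z, 0 < z -> (fun s => g (x * z) s - g x s) @ +oo -->
   x `^ gam * hr x * h z + x `^ (gam + rho) * H z.
  move=> z z0.
  have -> : x `^ gam * hr x * h z + x `^ (gam + rho) * H z = H (x * z) - H x.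
    by rewrite HE //; ring.
  by apply: cvgB; apply: hyp; rewrite // mulr_gt0.
exact: (cramer (lin y y0) (lin _ yy0) (ck y y0) (ck _ yy0) (cR y y0) (cR _ yy0) det).
Qed.
End S6.
Section S7.
Context {R : realType}.

Definition phi (g w : R) : R :=
  if 0 < w then expR (- (w `^ (- g^-1))) else if 0 < g then 0 else 1.

Lemma GEV_phi (g z : R) : g != 0 -> GEV g z = phi g (1 + g * z).
Proof. by move=> g0; rewrite /GEV (negbTE g0). Qed.

Lemma phi_bound (g y : R) : g != 0 -> 0 < y ->
  `|(if 0 < g then 0 else 1) - expR (- (y `^ (- g^-1)))| <= y `^ `|g^-1|.
Proof.
move=> g0 y0; case: ifP => gp.
- have gi : 0 < g^-1 by rewrite invr_gt0.
  rewrite (gtr0_norm gi) powRN.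
  set Y := y `^ g^-1.
  have Y0 : 0 < Y by rewrite powR_gt0.
  rewrite sub0r normrN (gtr0_norm (expR_gt0 _)) expRN.
  rewrite -[X in _ <= X]invrK lef_pV2 ?posrE ?expR_gt0 ?invr_gt0 //.
  by have := expR_ge1Dx Y^-1; lra.
- have gn : g < 0 by rewrite lt_neqAle g0 /= leNgt gp.
  have gi : g^-1 < 0 by rewrite invr_lt0.
  rewrite (ltr0_norm gi).
  set Y := y `^ (- g^-1).
  have Y0 : 0 < Y by rewrite powR_gt0.
  have e1 : expR (- Y) < 1 by rewrite expR_lt1 oppr_lt0.
  rewrite ger0_norm; last by lra.
  by have := expR_ge1Dx (- Y); lra.
Qed.

Lemma phi_cont (g w : R) : g != 0 -> {for w, continuous (phi g)}.
Proof.
move=> g0; rewrite /prop_for /continuous_at.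
case: (ltgtP w 0) => [wn|wp|->].
- have -> : phi g w = (if 0 < g then 0 else 1) by rewrite /phi ltNge ltW.
  apply: cvg_near_cst; near=> y; have : y < 0 by near: y; apply: lt_nbhsl.
  by move=> yn; rewrite /phi ltNge ltW.
- have cf : {for w, continuous (fun y => expR (- (y `^ (- g^-1))))}.
    apply: (continuous_comp (f := fun y => - (y `^ (- g^-1))) (g := expR)).
      exact: (cvgN (@cont_powR R (- g^-1) w wp)).
    exact: continuous_expR.
  have -> : phi g w = expR (- (w `^ (- g^-1))) by rewrite /phi wp.
  apply: (@cvg_trans _ ((fun y : R => expR (- (y `^ (- g^-1)))) @ w)); last exact: cf.
  apply: near_eq_cvg; near=> y; have : 0 < y by near: y; apply: lt_nbhsr.
  by move=> yp; rewrite /phi yp.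
- have -> : phi g 0 = (if 0 < g then 0 else 1) by rewrite /phi ltxx.
  apply/cvgrPdist_lt => e e0.
  have q0 : 0 < `|g^-1| by rewrite normr_gt0 invr_eq0.
  have := powR_cvg0 q0; move/cvgr_lt => /(_ e e0).
  rewrite near_withinE; apply: filterS => y Hy.
  rewrite /phi; have [yp|yn] := ltP 0 y.
  + exact: le_lt_trans (phi_bound g0 yp) (Hy yp).
  + by rewrite subrr normr0.
Unshelve. all: end_near.
Qed.

Lemma GEV_cont (g z : R) : {for z, continuous (GEV g)}.
Proof.
have [->|g0] := eqVneq g 0.
- have -> : GEV (0 : R) = (fun z : R => expR (- expR (- z))).
    apply/funext => y; by rewrite /GEV eqxx.
  apply: (continuous_comp (f := fun y => - expR (- y)) (g := expR)); last exact: continuous_expR.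
  apply: cvgN.
  apply: (continuous_comp (f := fun y => - y) (g := expR)); last exact: continuous_expR.
  exact: cvgN cvg_id.
- have -> : GEV g = (fun z => phi g (1 + g * z)).
    by apply/funext => y; rewrite GEV_phi.
  apply: (continuous_comp (f := fun y => 1 + g * y) (g := phi g)); last exact: phi_cont.
  apply: cvgD; first exact: cvg_cst.
  by apply: cvgMr; exact: cvg_id.
Qed.
End S7.
Section S8.
Context {R : realType}.

Lemma sandwich (f : nat -> R -> R) (G : R -> R) (zs : nat -> R) (z : R) :
 (\forall n \near \oo, forall w1 w2, w1 <= w2 -> f n w1 <= f n w2) ->
 (forall w, (fun n => f n w) @ \oo --> G w) -> {for z, continuous G} ->
 zs @ \oo --> z -> (fun n => f n (zs n)) @ \oo --> G z.
Proof.
move=> mono cf cG cz; apply/cvgrPdist_lt => e e0.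
have e2 : 0 < e / 2 by rewrite divr_gt0.
have Hn : \forall t \near z, `|G z - G t| < e / 2.
  by move: cG => /cvgrPdist_lt; apply.

have [d /= d0 Hd] := (nbhs_ballP _ _).1 Hn.
have d2 : 0 < d / 2 by rewrite divr_gt0.
have bw : forall w, `|z - w| < d -> `|G z - G w| < e / 2.
  by move=> w wd; apply: Hd; rewrite -ball_normE /=.
have b1 := bw (z - d / 2).
have b2 := bw (z + d / 2).
have cz' := cvgr_dist_lt _ _ cz (d / 2) d2.
have c1 := cvgr_dist_lt _ _ (cf (z - d / 2)) (e / 2) e2.
have c2 := cvgr_dist_lt _ _ (cf (z + d / 2)) (e / 2) e2.
near=> n.
have Hz : `|z - zs n| < d / 2 by near: n; exact: cz'.
have H1 : `|G (z - d / 2) - f n (z - d / 2)| < e / 2 by near: n; exact: c1.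
have H2 : `|G (z + d / 2) - f n (z + d / 2)| < e / 2 by near: n; exact: c2.
have mn : forall w1 w2, w1 <= w2 -> f n w1 <= f n w2 by near: n; exact: mono.
move: Hz; rewrite ltr_distlC => /andP[l1 l2].
have m1 := mn _ _ (ltW l1).
have m2 := mn _ _ (ltW l2).
move: H1 H2 b1 b2; rewrite !ltr_distlC.
have q1 : (z - d < z - d / 2 < z + d) by apply/andP; split; lra.
have q2 : (z - d < z + d / 2 < z + d) by apply/andP; split; lra.
move=> /andP[? ?] /andP[? ?] /(_ q1) /andP[? ?] /(_ q2) /andP[? ?].
by apply/andP; split; lra.
Unshelve. all: end_near.
Qed.
End S8.
Section S9.
Context {R : realType}.

Lemma scale_cvgl (x : R) : 0 < x -> (fun s => x * s) @ +oo --> +oo.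
Proof.
move=> x0; apply/cvgryPge => M.
have := nbhs_pinfty_ge (num_real (M / x)); apply: filterS => s sM.
by rewrite mulrC -ler_pdivrMr.
Qed.

Lemma powRinv (t g : R) : 0 < t -> t^-1 `^ g = (t `^ g)^-1.
Proof.
move=> t0; have tg : t `^ g != 0 by rewrite gt_eqF // powR_gt0.
have ti : 0 < t^-1 by rewrite invr_gt0.
have := @powRM _ t^-1 t g (ltW ti) (ltW t0).
rewrite mulVf ?gt_eqF // powR1 /= => H.
by rewrite -[LHS]mulr1 -(mulfV tg) mulrA -H mul1r.
Qed.

Lemma hpowV (r t : R) : 0 < t -> hpow r t^-1 * t `^ r = - hpow r t.
Proof.
move=> t0; have tg : t `^ r != 0 by rewrite gt_eqF // powR_gt0.
rewrite /hpow; case: eqP => [->|r0].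
  by rewrite powRr0 mulr1 lnV ?posrE.
rewrite powRinv //; field; rewrite tg; apply/andP; split => //; exact/eqP.
Qed.

Lemma hpowNV (g t : R) : 0 < t -> t^-1 `^ g * hpow g t = hpow (- g) t.
Proof.
move=> t0; have tg : t `^ g != 0 by rewrite gt_eqF // powR_gt0.
rewrite /hpow oppr_eq0; case: eqP => [->|g0].
  by rewrite powRr0 mul1r.
rewrite powRinv // powRN; field; rewrite tg; apply/andP; split => //; exact/eqP.
Qed.

Lemma hpow_inv (g t : R) : 0 < t -> hpow g t^-1 = - (t^-1 `^ g * hpow g t).
Proof.
move=> t0; have ti : 0 < t^-1 by rewrite invr_gt0.
have := @hpowM _ g t^-1 t ti t0.
rewrite mulVf ?gt_eqF // hpow1 => H.
rewrite [LHS](_ : _ = (hpow g t^-1 + t^-1 `^ g * hpow g t) - t^-1 `^ g * hpow g t); last by ring.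
by rewrite -H sub0r.
Qed.

Context {d : measure_display} {T : measurableType d}.

Lemma Mmax_meas (X : nat -> T -> R) N : (forall t, measurable_fun setT (X t)) ->
  measurable_fun setT (Mmax X N).
Proof.
move=> mX.
have H : forall r : seq nat,
    measurable_fun setT (fun w => \big[Num.max/X 1%N w]_(i <- r) X i w).
  elim => [|i r IH].
    under eq_fun do rewrite big_nil; exact: mX.
  under eq_fun do rewrite big_cons; exact: measurable_realfun.measurable_maxr.
exact: H.
Qed.

Lemma le_meas_set (f : T -> R) t : measurable_fun setT f -> measurable [set w | f w <= t].
Proof.
move=> mf; have := mf measurableT _ (measurable_itv `]-oo, t]).
rewrite setTI; congr measurable; apply/seteqP; split => w /=; rewrite in_itv /=; by [].
Qed.

End S9.
Unset Implicit Arguments. Set Strict Implicit.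

Theorem lemma2p2 (R : realType) (d : measure_display) (T : measurableType d)
  (P : probability T R) (X : nat -> T -> R)
  (gam rho theta lam : R) (a A : R -> R) (m k : nat -> nat) :
  (forall t, measurable_fun setT (X t)) ->
  strictly_stationary P X ->
  continuous (stat_cdf P X) ->
  rho <= 0 -> 0 < theta <= 1 ->
  let b := fun t : R => geninv (stat_cdf P X) (expR (- t^-1)) in
  (forall s, 0 < s -> 0 < a s) ->
  ((\forall s \near +oo, 0 < A s) \/ (\forall s \near +oo, A s < 0)) ->
  A @ +oo --> 0 ->
  (forall x, 0 < x ->
     (fun s => (A s)^-1 * ((b (s * x) - b s) / a s - h_int gam x)) @ +oo
       --> Hgr gam rho x) ->
  (fun n => (m n)%:R : R) @ \oo --> +oo ->
  (fun n => (k n)%:R : R) @ \oo --> +oo ->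
  (fun n => Num.sqrt (k n)%:R * A (m n)%:R) @ \oo --> lam ->
  let a_th := fun t : R => a t * theta `^ gam in
  let b_th := fun t : R => b t + a t * hpow gam theta in
  [/\ (fun n => Num.sqrt (k n)%:R *
          (a_th (m n)%:R / a (theta * (m n)%:R) - 1)) @ \oo
        --> - lam * hpow rho theta,
      (fun n => Num.sqrt (k n)%:R *
          ((b_th (m n)%:R - b (theta * (m n)%:R)) / a (theta * (m n)%:R)))
        @ \oo --> lam * theta `^ rho * Hgr gam rho theta^-1
                  + lam * hpow rho theta * (- hpow (- gam) theta)
    & (forall z, (fun N : nat => fine (P [set w | Mmax X N w <= a_th N%:R * z + b_th N%:R]))
                   @ \oo --> GEV gam z) ->
      forall z, (fun n => fine (P [set w | Mmax X (m n) w <=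
                     a (theta * (m n)%:R) * z + b (theta * (m n)%:R)]))
                  @ \oo --> GEV gam z].
Proof.
move=> Xm stat Fc rho0 /andP[th0 th1] b apos Asgn A0 hyp mc kc sc a_th b_th.
have hE : forall x y : R, 0 < x -> 0 < y ->
    h_int gam (x * y) = h_int gam x + x `^ gam * h_int gam y.
  by move=> x y x0 y0; rewrite !h_int_hpow ?mulr_gt0 // hpowM.
have HE : forall x y : R, 0 < x -> 0 < y ->
    Hgr gam rho (x * y) = Hgr gam rho x + x `^ gam * hpow rho x * h_int gam y
      + x `^ (gam + rho) * Hgr gam rho y.
  by move=> x y x0 y0; rewrite !Hgr_Hc ?mulr_gt0 // h_int_hpow // HcM.
have two0 : (0 : R) < 2 by [].
have det : h_int gam 2 * Hgr gam rho (2 * 2) - h_int gam (2 * 2) * Hgr gam rho 2 != 0.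
  rewrite !Hgr_Hc ?mulr_gt0 // !h_int_hpow ?mulr_gt0 //; apply: det_ne0.
  by rewrite ltr1n.
have Anz : \forall s \near +oo, A s != 0.
  by case: Asgn => H; apply: filterS H => s Hs; [rewrite gt_eqF | rewrite lt_eqF].
have thi0 : 0 < theta^-1 by rewrite invr_gt0.
have [P1 _] := core hE HE apos Anz hyp thi0 two0 det.
have [P2 U2] := core hE HE apos Anz hyp th0 two0 det.
have tg0 : 0 < theta `^ gam by rewrite powR_gt0.
have tgn : theta `^ gam != 0 by rewrite gt_eqF.
have spos : \forall s \near +oo, 0 < (s : R) by exact: (nbhs_pinfty_gt (num_real 0)).
have r2 : (fun s => a (s * theta) / a s) @ +oo --> theta `^ gam.
  apply: cvg_trans (near_eq_cvg (f := fun s => theta `^ gam +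
      A s * ((a (s * theta) / a s - theta `^ gam) / A s)) _) _.
    near=> s; have As : A s != 0 by near: s.
    have s0 : 0 < s by near: s.
    have as0 : a s != 0 by rewrite gt_eqF // apos.
    by field; rewrite As as0.
  have := cvgD (cvg_cst (theta `^ gam)) (cvgM A0 P2).
  rewrite mul0r addr0 => H; apply: H; typeclasses eauto.
have AR : (fun s => A (s * theta) / A s) @ +oo --> theta `^ rho.
  apply: cvg_trans (near_eq_cvg (f := fun s =>
      (a (s * theta) / a s * (A (s * theta) / A s)) / (a (s * theta) / a s)) _) _.
    near=> s; have s0 : 0 < s by near: s.
    have as0 : a s != 0 by rewrite gt_eqF // apos.
    have ast0 : a (s * theta) != 0 by rewrite gt_eqF // apos // mulr_gt0.
    have As : A s != 0 by near: s.
    by field; rewrite as0 ast0 As.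
  have -> : theta `^ rho = theta `^ (gam + rho) / theta `^ gam.
    by rewrite powRDp // mulrAC mulfV ?mul1r.
  apply: cvgM U2 _; exact: cvgV tgn r2.
have tm : (fun n => theta * (m n)%:R) @ \oo --> +oo := cvg_comp _ _ mc (scale_cvgl th0).
have mpos : \forall n \near \oo, 0 < ((m n)%:R : R) := mc _ spos.
have Anm : \forall n \near \oo, A (m n)%:R != 0 := mc _ Anz.
have Antm : \forall n \near \oo, A (theta * (m n)%:R) != 0 := tm _ Anz.
have P1n := cvg_comp _ _ tm P1.
have ARn := cvg_comp _ _ mc AR.
have g1n := cvg_comp _ _ tm (hyp _ thi0).
have A0n := cvg_comp _ _ tm A0.
have sm : forall t : R, theta * t * theta^-1 = t.
  by move=> t; rewrite mulrAC mulfV ?gt_eqF ?mul1r.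
have Xi := @powRinv R theta gam th0.
have hv := @hpow_inv R gam theta th0.
have hV' : hpow rho theta = - (hpow rho theta^-1 * theta `^ rho) by rewrite hpowV // opprK.
split.
- apply: cvg_trans (near_eq_cvg (f := fun n => theta `^ gam *
      ((a (theta * (m n)%:R * theta^-1) / a (theta * (m n)%:R) - theta^-1 `^ gam)
        / A (theta * (m n)%:R)) *
      (Num.sqrt (k n)%:R * A (m n)%:R) * (A ((m n)%:R * theta) / A (m n)%:R)) _) _.
    near=> n.
    have mn0 : 0 < ((m n)%:R : R) by near: n.
    have Am : A (m n)%:R != 0 by near: n.
    have Atm : A (theta * (m n)%:R) != 0 by near: n.
    have atm : a (theta * (m n)%:R) != 0 by rewrite gt_eqF // apos // mulr_gt0.
    rewrite /a_th sm Xi (mulrC (m n)%:R theta).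
    by field; rewrite Am Atm atm tgn.
  have -> : - lam * hpow rho theta =
      theta `^ gam * (theta^-1 `^ gam * hpow rho theta^-1) * lam * theta `^ rho.
    by rewrite hV' Xi; field.
  apply: cvgM; last exact: ARn.
  apply: cvgM; last exact: sc.
  apply: cvgMr; exact: P1n.
- apply: cvg_trans (near_eq_cvg (f := fun n =>
      (Num.sqrt (k n)%:R * A (m n)%:R) * (A ((m n)%:R * theta) / A (m n)%:R) *
      (((a (theta * (m n)%:R * theta^-1) / a (theta * (m n)%:R) - theta^-1 `^ gam)
        / A (theta * (m n)%:R)) * hpow gam theta +
       (A (theta * (m n)%:R))^-1 * ((b (theta * (m n)%:R * theta^-1) - b (theta * (m n)%:R))
         / a (theta * (m n)%:R) - h_int gam theta^-1))) _) _.
    near=> n.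
    have mn0 : 0 < ((m n)%:R : R) by near: n.
    have Am : A (m n)%:R != 0 by near: n.
    have Atm : A (theta * (m n)%:R) != 0 by near: n.
    have atm : a (theta * (m n)%:R) != 0 by rewrite gt_eqF // apos // mulr_gt0.
    rewrite /b_th !sm (h_int_hpow _ thi0) hv (mulrC (m n)%:R theta).
    by field; rewrite Am Atm atm.
  have -> : lam * theta `^ rho * Hgr gam rho theta^-1
      + lam * hpow rho theta * (- hpow (- gam) theta) =
      lam * theta `^ rho * ((theta^-1 `^ gam * hpow rho theta^-1) * hpow gam theta
        + Hgr gam rho theta^-1).
    by rewrite -(hpowNV gam th0) hV'; ring.
  apply: cvgM; first by apply: cvgM; [exact: sc | exact: ARn].
  apply: cvgD; last exact: g1n.
  apply: cvgMl; exact: P1n.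
move=> Hz z.
have mnat : m @ \oo --> \oo by apply/(@cvgrnyP R); exact: mc.
pose f := fun n w => fine (P [set x | Mmax X (m n) x <= a_th (m n)%:R * w + b_th (m n)%:R]).
pose u := fun n => a_th (m n)%:R / a (theta * (m n)%:R) - 1.
pose v := fun n => (b_th (m n)%:R - b (theta * (m n)%:R)) / a (theta * (m n)%:R).
pose zs := fun n => (z - v n) / (1 + u n).
have cf : forall w, (fun n => f n w) @ \oo --> GEV gam w.
  by move=> w; exact: (cvg_comp _ _ mnat (Hz w)).
have mono : \forall n \near \oo, forall w1 w2, w1 <= w2 -> f n w1 <= f n w2.
  near=> n => w1 w2 w12.
  have mn0 : 0 < ((m n)%:R : R) by near: n.
  have ath : 0 < a_th (m n)%:R by rewrite /a_th mulr_gt0 // apos.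
  have ms := fun t => le_meas_set t (@Mmax_meas R d T X (m n) Xm).
  rewrite /f; apply: fine_le.
  - by apply: fin_num_measure; exact: ms.
  - by apply: fin_num_measure; exact: ms.
  - apply: le_measure; rewrite ?inE; [exact: ms | exact: ms |].
    move=> x /= H; apply: le_trans H _.
    by rewrite lerD2r ler_pM2l.
have cu : u @ \oo --> 0.
  apply: cvg_trans (near_eq_cvg (f := fun n => theta `^ gam *
      ((a (theta * (m n)%:R * theta^-1) / a (theta * (m n)%:R) - theta^-1 `^ gam)
        / A (theta * (m n)%:R)) * A (theta * (m n)%:R)) _) _.
    near=> n.
    have mn0 : 0 < ((m n)%:R : R) by near: n.
    have Atm : A (theta * (m n)%:R) != 0 by near: n.
    have atm : a (theta * (m n)%:R) != 0 by rewrite gt_eqF // apos // mulr_gt0.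
    rewrite /u /a_th sm Xi.
    by field; rewrite Atm atm tgn.
  have := cvgM (cvgM (cvg_cst (theta `^ gam)) P1n) A0n.
  by rewrite mulr0 => H; apply: H; typeclasses eauto.
have cv : v @ \oo --> 0.
  apply: cvg_trans (near_eq_cvg (f := fun n => A (theta * (m n)%:R) *
      (((a (theta * (m n)%:R * theta^-1) / a (theta * (m n)%:R) - theta^-1 `^ gam)
        / A (theta * (m n)%:R)) * hpow gam theta +
       (A (theta * (m n)%:R))^-1 * ((b (theta * (m n)%:R * theta^-1) - b (theta * (m n)%:R))
         / a (theta * (m n)%:R) - h_int gam theta^-1))) _) _.
    near=> n.
    have mn0 : 0 < ((m n)%:R : R) by near: n.
    have Atm : A (theta * (m n)%:R) != 0 by near: n.
    have atm : a (theta * (m n)%:R) != 0 by rewrite gt_eqF // apos // mulr_gt0.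
    rewrite /v /b_th !sm (h_int_hpow _ thi0) hv.
    by field; rewrite Atm atm.
  have := cvgM A0n (cvgD (cvgM P1n (cvg_cst (hpow gam theta))) g1n).
  by rewrite mul0r => H; apply: H; typeclasses eauto.
have czs : zs @ \oo --> z.
  have := cvgM (cvgB (cvg_cst z) cv) (cvgV _ (cvgD (cvg_cst (1 : R)) cu)).
  rewrite subr0 addr0 invr1 mulr1 => H; apply: H; try typeclasses eauto.
  by rewrite oner_eq0.
apply: (@cvg_trans _ ((fun n => f n (zs n)) @ \oo)); last first.
  exact: (sandwich mono cf (@GEV_cont R gam z) czs).
apply: near_eq_cvg; near=> n.
have mn0 : 0 < ((m n)%:R : R) by near: n.
have atm : a (theta * (m n)%:R) != 0 by rewrite gt_eqF // apos // mulr_gt0.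
have am : a (m n)%:R != 0 by rewrite gt_eqF // apos.
have thr : a_th (m n)%:R * ((z - (b_th (m n)%:R - b (theta * (m n)%:R)) / a (theta * (m n)%:R)) /
     (1 + (a_th (m n)%:R / a (theta * (m n)%:R) - 1))) + b_th (m n)%:R =
     a (theta * (m n)%:R) * z + b (theta * (m n)%:R).
  rewrite /a_th; field; rewrite atm /=.
  have -> : a (theta * (m n)%:R) + (a (m n)%:R * theta `^ gam + -1 * a (theta * (m n)%:R))
    = a (m n)%:R * theta `^ gam by ring.
  by rewrite mulf_neq0.
by rewrite /f /zs /u /v thr.
Unshelve. all: end_near.
Qed.
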